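(* Let $S=\{x_0x_2x_3=x_1^3\}\subset\mathbb P^3$ be the cubic surface with three $\boldsymbol A_2$ singularities, and consider the GIT quotient $\mathbb P(H^0(S,-K_S))^{ss}/\!\!/\mathrm{Aut}(S)$ for the natural linear action described in the context (the linearisation with $a=b=0$). Let $D\in|-K_S|\cong\mathbb P(H^0(S,-K_S))$. Then: (1) $D$ is stable if and only if $D\cap\mathrm{Sing}(S)=\emptyset$; (2) $D$ is polystable but not stable if and only if $D=H_*$, the union of the unique three lines in $S$ which contain the three $\boldsymbol A_2$ singularities; (3) $D$ is unstable if and only if $D$ is either a cuspidal plane cubic curve with $\mathrm{Sing}(D)\cap\mathrm{Sing}(S)\neq\emptyset$ or a triple line.
   Context: $H^0(S,-K_S)=H^0(S,\mathcal O_S(1))$ has basis $x_0,x_1,x_2,x_3$. $\mathrm{Aut}(S)\cong(\mathbb C^* )^2\rtimes\Sigma_3$, where $(t_0,t_2)\in(\mathbb C^* )^2$ acts by $(t_0,t_2)\cdot[x_0,x_1,x_2,x_3]=[t_0x_0,x_1,t_2x_2,t_0^{-1}t_2^{-1}x_3]$ and $\Sigma_3$ acts by permuting $x_0,x_2,x_3$. The linearisation ''$a=b=0$'' is this linear representation on $H^0(S,\mathcal O_S(1))$ with no twist by a character (a general twist would multiply by $t_0^{-a}t_2^{-b}$). $H_*=\{x_1=0\}|_S$. *)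

(* Defs.v *)
From mathcomp Require Import all_boot all_order all_algebra all_fingroup.
From mathcomp Require Import reals complex mpoly.
Set Implicit Arguments. Unset Strict Implicit. Unset Printing Implicit Defensive.
Import GRing.Theory.
Local Open Scope ring_scope.

(* Vectors of H^0(S, O_S(1)) = span(x_0,x_1,x_2,x_3) are coefficient
   vectors a : 'I_4 -> C, the section being  \sum_i a_i x_i.
   Points of P^3 (and of |-K_S| = P(H^0)) are nonzero vectors up to scaling;
   all predicates below are invariant under scaling. *)

Section Cubic.
Variable R : realType.
Local Notation C := (R[i]).
Local Notation vec := ('I_4 -> C).

Definition nonzero (v : vec) : Prop := exists i, v i != 0.

(* group elements: (t0, t2, sigma) with t0, t2 nonzero, sigma permuting
   the indices {0,2,3} (encoded as 'I_3 via idx3). *)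
Definition grp := (C * C * 'S_3)%type.
Definition in_grp (g : grp) : Prop := g.1.1 != 0 /\ g.1.2 != 0.

Definition idx3 (j : 'I_3) : 'I_4 := inord (nth 0%N [:: 0%N; 2%N; 3%N] j).
Definition idx3inv (i : 'I_4) : 'I_3 :=
  inord (if i == 0 :> nat then 0%N else if i == 2 :> nat then 1%N else 2%N).
Definition perm4 (s : 'S_3) (i : 'I_4) : 'I_4 :=
  if i == 1 :> nat then i else idx3 (s (idx3inv i)).

(* torus weights: (t0,t2).[x0,x1,x2,x3] = [t0 x0, x1, t2 x2, t0^-1 t2^-1 x3]
   (linearisation a = b = 0: no twist by a character) *)
Definition tweight (t0 t2 : C) (i : 'I_4) : C :=
  if i == 0 :> nat then t0 else if i == 2 :> nat then t2
  else if i == 3 :> nat then (t0 * t2)^-1 else 1.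

(* action on coefficient vectors of sections: first the torus, then sigma,
   where sigma sends x_i to x_(perm4 sigma i), so the coefficient of
   x_(perm4 sigma i) in sigma.s is the coefficient of x_i in s. *)
Definition act (g : grp) (a : vec) : vec :=
  fun i => let j := perm4 (g.2^-1)%g i in tweight g.1.1 g.1.2 j * a j.

Definition orbit (a : vec) (x : vec) : Prop :=
  exists g, in_grp g /\ forall i, x i = act g a i.

Definition zariski_closure (O : vec -> Prop) (w : vec) : Prop :=
  forall p : {mpoly C[4]}, (forall x, O x -> p.@[x] = 0) -> p.@[w] = 0.

(* GIT notions for the linear action on the affine cone (Mumford) *)
Definition semistable (a : vec) : Prop :=
  ~ zariski_closure (orbit a) (fun _ => 0).
Definition unstable (a : vec) : Prop := ~ semistable a.
Definition polystable (a : vec) : Prop :=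
  nonzero a /\ (forall w, zariski_closure (orbit a) w -> orbit a w).
Definition finite_stabilizer (a : vec) : Prop :=
  exists s : seq grp, forall g, in_grp g -> (forall i, act g a i = a i) -> g \in s.
Definition stable (a : vec) : Prop := polystable a /\ finite_stabilizer a.

Definition Fcub : {mpoly C[4]} := 'X_0 * 'X_2 * 'X_3 - 'X_1 ^+ 3.
Definition lin (a : vec) : {mpoly C[4]} := \sum_i a i *: 'X_i.

Definition SingS (p : vec) : Prop :=
  nonzero p /\ Fcub.@[p] = 0 /\ forall i, (mderiv i Fcub).@[p] = 0.

Definition meets_SingS (a : vec) : Prop :=
  exists p, SingS p /\ (lin a).@[p] = 0.

(* D = H_* : D is the point of |-K_S| = P(H^0) given by the section x_1 *)
Definition is_Hstar (a : vec) : Prop :=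
  exists c : C, c != 0 /\ forall i, a i = c * (i == 1 :> nat)%:R.

Definition onD (a : vec) (p : vec) : Prop :=
  nonzero p /\ Fcub.@[p] = 0 /\ (lin a).@[p] = 0.
(* Sing(D): Jacobian criterion for the complete intersection F = l_a = 0:
   grad F(p) and a are linearly dependent (a <> 0). *)
Definition SingD (a : vec) (p : vec) : Prop :=
  onD a p /\ exists c : C, forall i, (mderiv i Fcub).@[p] = c * a i.

Definition hessq (p v : vec) : C :=
  \sum_i \sum_j (mderiv j (mderiv i Fcub)).@[p] * v i * v j.

(* the plane cubic D is reducible: F|_H = L|_H * Q|_H with L a linear form
   not vanishing identically on H = {l_a = 0} *)
Definition D_reducible (a : vec) : Prop :=
  exists L Q M : {mpoly C[4]},
    [/\ L \is 1.-homog, Q \is 2.-homog, M \is 2.-homog,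
        (forall c : C, L != c *: lin a) & Fcub = L * Q + lin a * M].

(* p is a cusp of the plane curve D: a singular point of D whose tangent cone
   (the quadratic part of the equation of D at p, i.e. the Hessian form of F
   restricted to the plane l_a = 0) is a (nonzero) double line. *)
Definition cusp (a : vec) (p : vec) : Prop :=
  SingD a p /\
  (exists m : vec, forall v : vec, (lin a).@[v] = 0 ->
       hessq p v = (\sum_i m i * v i) ^+ 2) /\
  (exists v : vec, (lin a).@[v] = 0 /\ hessq p v != 0).

Definition cuspidal_cubic (a : vec) : Prop :=
  ~ D_reducible a /\ exists p, cusp a p.

(* triple line: D = 3L as a divisor on the plane H *)
Definition triple_line (a : vec) : Prop :=
  exists L M : {mpoly C[4]},
    [/\ L \is 1.-homog, M \is 2.-homog,
        (forall c : C, L != c *: lin a) & Fcub = L ^+ 3 + lin a * M].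

End Cubic.

(* Main.v *)
Require Import Defs.
From mathcomp Require Import all_boot all_order all_algebra all_fingroup.
From mathcomp Require Import reals complex mpoly.
From mathcomp Require Import ring.
From Stdlib Require Import Classical.
Import GRing.Theory Num.Theory.
Local Open Scope ring_scope.

Set Implicit Arguments.


Lemma sum4 (V : zmodType) (f : 'I_4 -> V) :
  \sum_i f i = f 0 + f 1 + f 2 + f 3.
Proof.
rewrite !big_ord_recr big_ord0 /= add0r.
by congr (_ + _ + _ + _); f_equal; apply/val_inj.
Qed.

Lemma Fcub_eval (R : realType) (x : 'I_4 -> R[i]) :
  (Fcub R).@[x] = x 0 * x 2 * x 3 - x 1 ^+ 3.
Proof. rewrite /Fcub mevalB !mevalM !mevalXU. ring. Qed.

Lemma lin_eval (R : realType) (a x : 'I_4 -> R[i]) :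
  (lin a).@[x] = a 0 * x 0 + a 1 * x 1 + a 2 * x 2 + a 3 * x 3.
Proof. by rewrite /lin raddf_sum /= sum4 !mevalZ !mevalXU. Qed.

Lemma mderivXU (R : realType) (i j : 'I_4) :
  mderiv i ('X_j : {mpoly R[i][4]}) = ((i == j)%:R)%:MP.
Proof.
rewrite mderivX mnm1E.
case: eqP => [->|ne].
  have -> : (U_(i) - U_(i))%MM = 0%MM by apply/mnmP=> k; rewrite mnmBE subnn mnm0E.
  by rewrite mpolyX0 eqxx /= scale1r.
have ne' : (i == j) = false by apply/eqP=> e; apply: ne; rewrite e.
by rewrite ne' /= scale0r mpolyC0.
Qed.

Lemma dF_eval (R : realType) (i : 'I_4) (x : 'I_4 -> R[i]) :
  (mderiv i (Fcub R)).@[x] =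
  (i == 0)%:R * x 2 * x 3 + (i == 2)%:R * x 0 * x 3 + (i == 3)%:R * x 0 * x 2
  - 3 * (i == 1)%:R * x 1 ^+ 2.
Proof.
rewrite /Fcub !(mderivB, mderivD, mderivM, mderivXU).
rewrite !(mevalB, mevalD, mevalM, mevalC, mevalXU). ring.
Qed.

Lemma d2F_eval (R : realType) (i j : 'I_4) (x : 'I_4 -> R[i]) :
  (mderiv j (mderiv i (Fcub R))).@[x] =
  (i == 0)%:R * ((j == 2)%:R * x 3 + (j == 3)%:R * x 2)
  + (i == 2)%:R * ((j == 0)%:R * x 3 + (j == 3)%:R * x 0)
  + (i == 3)%:R * ((j == 0)%:R * x 2 + (j == 2)%:R * x 0)
  - 6 * (i == 1)%:R * (j == 1)%:R * x 1.
Proof.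
rewrite /Fcub !(mderivB, mderivD, mderivM, mderivC, mderivXU).
rewrite !(mevalB, mevalD, mevalM, mevalC, mevalXU, meval0). ring.
Qed.

Lemma hessq_eval (R : realType) (p v : 'I_4 -> R[i]) :
  hessq p v = 2 * (p 3 * v 0 * v 2 + p 2 * v 0 * v 3 + p 0 * v 2 * v 3)
    - 6 * p 1 * v 1 ^+ 2.
Proof.
rewrite /hessq.
under eq_bigr => i _ do under eq_bigr => j _ do rewrite d2F_eval.
rewrite sum4 !sum4.
rewrite !eqxx.
have E : forall (a b : 'I_4), (a == b) = (val a == val b) by [].
rewrite !E /=.
ring.
Qed.

Lemma mcoeffXU' (R : realType) (j : 'I_4) m : (('X_j : {mpoly R[i][4]})@_m) = (U_(j)%MM == m)%:R.
Proof. exact: mcoeffX. Qed.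

Lemma homog1_lin (R : realType) (L : {mpoly R[i][4]}) :
  L \is 1.-homog -> L = lin (fun i => L@_U_(i)).
Proof.
move=> hL; apply/mpolyP => m.
rewrite /lin raddf_sum /=.
case: (mdeg1P m) => [[k /eqP->]|nm].
  rewrite (bigD1 k) //= mcoeffZ mcoeffXU eqxx mulr1 big1 ?addr0 // => j nj.
  by rewrite mcoeffZ mcoeffXU (negbTE nj) mulr0.
rewrite (dhomog_nemf_coeff hL); last first.
  by apply/negP => /mdeg1P.
rewrite big1 // => j _; rewrite mcoeffZ mcoeffXU'.
case: eqP => [e|]; last by rewrite mulr0.
by exfalso; apply: nm; exists j; rewrite -e.
Qed.
Lemma ord4P (i : 'I_4) : [\/ i = 0, i = 1, i = 2 | i = 3].
Proof.
case: i => [[|[|[|[|//]]]] Hi].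
- by constructor 1; apply/val_inj.
- by constructor 2; apply/val_inj.
- by constructor 3; apply/val_inj.
- by constructor 4; apply/val_inj.
Qed.

Lemma idx3K (j : 'I_3) : idx3inv (idx3 j) = j.
Proof.
by case: j => [[|[|[|//]]] Hj]; apply/val_inj; rewrite /idx3inv /idx3 /= !inordK.
Qed.

Lemma idx3_neq1 (j : 'I_3) : (idx3 j == 1 :> nat) = false.
Proof. by case: j => [[|[|[|//]]] Hj]; rewrite /idx3 /= inordK. Qed.

Lemma idx3invK (i : 'I_4) : (i == 1 :> nat) = false -> idx3 (idx3inv i) = i.
Proof.
by case: i => [[|[|[|[|//]]]] Hi] //= _; apply/val_inj; rewrite /idx3inv /idx3 /= !inordK.
Qed.

Lemma perm4K (s : 'S_3) (i : 'I_4) : perm4 s^-1 (perm4 s i) = i.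
Proof.
case h1: (i == 1 :> nat).
  by rewrite /perm4 !h1.
by rewrite {2}/perm4 h1 /perm4 idx3_neq1 idx3K permK idx3invK.
Qed.

Lemma perm4K' (s : 'S_3) (i : 'I_4) : perm4 s (perm4 s^-1 i) = i.
Proof. by rewrite -{1}(invgK s) perm4K. Qed.

Lemma perm4_1 (s : 'S_3) : perm4 s 1 = 1.
Proof. by rewrite /perm4 /=. Qed.

Lemma perm4_neq1 (s : 'S_3) (i : 'I_4) : (perm4 s i == 1) = (i == 1).
Proof.
have e : forall j : 'I_4, (j == 1) = (j == 1 :> nat) by [].
case h1: (i == 1 :> nat).
  by rewrite /perm4 h1.
by rewrite /perm4 h1 !e idx3_neq1 h1.
Qed.

Lemma perm4_id (i : 'I_4) : perm4 1 i = i.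
Proof.
rewrite /perm4; case: ifP => // h1; by rewrite perm1 idx3invK.
Qed.

Lemma actE (R : realType) (g : grp R) a i :
  Defs.act g a i = tweight g.1.1 g.1.2 (perm4 g.2^-1 i) * a (perm4 g.2^-1 i).
Proof. by []. Qed.

Lemma tweight0 (R : realType) (t0 t2 : R[i]) : tweight t0 t2 0 = t0. Proof. by []. Qed.
Lemma tweight1 (R : realType) (t0 t2 : R[i]) : tweight t0 t2 1 = 1. Proof. by []. Qed.
Lemma tweight2 (R : realType) (t0 t2 : R[i]) : tweight t0 t2 2 = t2. Proof. by []. Qed.
Lemma tweight3 (R : realType) (t0 t2 : R[i]) : tweight t0 t2 3 = (t0 * t2)^-1. Proof. by []. Qed.

Lemma tweight_neq0 (R : realType) (t0 t2 : R[i]) i :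
  t0 != 0 -> t2 != 0 -> tweight t0 t2 i != 0.
Proof.
move=> h0 h2; case: (ord4P i) => ->; rewrite ?tweight0 ?tweight1 ?tweight2 ?tweight3 //.
  exact: oner_neq0.
by rewrite invr_eq0 mulf_neq0.
Qed.

Lemma prod_neq1 (R : comRingType) (f : 'I_4 -> R) :
  \prod_(i | i != 1) f i = f 0 * f 2 * f 3.
Proof.
rewrite big_mkcond !big_ord_recr big_ord0 /= mul1r mulr1.
by congr (_ * _ * _); f_equal; apply/val_inj.
Qed.

Lemma orbit1 (R : realType) (a x : 'I_4 -> R[i]) : Defs.orbit a x -> x 1 = a 1.
Proof.
by case=> g [_ h]; rewrite h actE perm4_1 tweight1 mul1r.
Qed.

Lemma orbit_prod (R : realType) (a x : 'I_4 -> R[i]) :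
  Defs.orbit a x -> x 0 * x 2 * x 3 = a 0 * a 2 * a 3.
Proof.
case=> [[[t0 t2] s]] [[/= h0 h2] h].
rewrite -!prod_neq1.
under eq_bigr do rewrite h actE /=.
rewrite (reindex_inj (can_inj (perm4K s))) /=.
rewrite (eq_bigl (fun i => i != 1)); last by move=> i; rewrite perm4_neq1.
under eq_bigr do rewrite perm4K.
rewrite big_split /= prod_neq1 tweight0 tweight2 tweight3.
by rewrite mulfV ?mul1r // mulf_neq0.
Qed.


Lemma orbit_torus (R : realType) (a x : 'I_4 -> R[i]) (t0 t2 : R[i]) :
  t0 != 0 -> t2 != 0 -> (forall i, x i = tweight t0 t2 i * a i) -> Defs.orbit a x.
Proof.
move=> h0 h2 h; exists (t0, t2, 1%g); split; first by split.
by move=> i; rewrite h actE /= invg1 perm4_id.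
Qed.

Lemma not1_cases (i : 'I_4) : i != 1 -> [\/ i = 0, i = 2 | i = 3].
Proof. by case: (ord4P i) => -> // _; [constructor 1|constructor 2|constructor 3]. Qed.

Lemma orbit_supp (R : realType) (a x : 'I_4 -> R[i]) :
  Defs.orbit a x -> x 0 = 0 -> x 2 = 0 -> x 3 = 0 ->
  [/\ a 0 = 0, a 2 = 0 & a 3 = 0].
Proof.
case=> [[[t0 t2] s]] [[/= h0 h2] h] x0 x2 x3.
have key : forall j : 'I_4, j != 1 -> a j = 0.
  move=> j hj.
  have hi : perm4 s j != 1 by rewrite perm4_neq1.
  have : x (perm4 s j) = 0 by case: (not1_cases _ hi) => ->.
  rewrite h actE /= perm4K => /eqP; rewrite mulf_eq0 (negbTE (@tweight_neq0 R t0 t2 j h0 h2)) /=.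
  by move/eqP.
by split; apply: key.
Qed.

Lemma zc_ext (R : realType) (O : ('I_4 -> R[i]) -> Prop) w w' :
  w =1 w' -> zariski_closure O w -> zariski_closure O w'.
Proof. by move=> e h p hp; rewrite -(meval_eq p e); apply: h. Qed.

Lemma horner_mmap (R : realType) (V : 'I_4 -> {poly R[i]}) (p : {mpoly R[i][4]}) t :
  (mmap polyC V p).[t] = p.@[fun i => (V i).[t]].
Proof.
rewrite mevalE /mmap horner_sum; apply: eq_bigr => m _.
rewrite hornerCM /mmap1 horner_prod; congr (_ * _); apply: eq_bigr => i _.
by rewrite horner_exp.
Qed.

Lemma natr_roots (R : realType) (n : nat) :
  uniq [seq (k.+1)%:R : R[i] | k <- iota 0 n] /\
  (forall t, t \in [seq (k.+1)%:R : R[i] | k <- iota 0 n] -> t != 0).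
Proof.
split.
  rewrite map_inj_uniq ?iota_uniq // => k l /eqP; rewrite eqr_nat eqSS; by move/eqP.
by move=> t /mapP [k _ ->]; rewrite pnatr_eq0.
Qed.

Lemma poly_zero_nz (R : realType) (q : {poly R[i]}) :
  (forall t, t != 0 -> q.[t] = 0) -> q = 0.
Proof.
move=> h; apply/eqP; apply/negPn/negP => nq.
have [u nz] := natr_roots R (size q).
have hall : all (root q) [seq (k.+1)%:R : R[i] | k <- iota 0 (size q)].
  by apply/allP => t ht; apply/rootP; apply: h; apply: nz.
by have := max_poly_roots nq hall u; rewrite size_map size_iota ltnn.
Qed.

Lemma avoid_seq (R : realType) (s : seq R[i]) : exists t, t != 0 /\ t \notin s.
Proof.
have [u nz] := natr_roots R (size s).+1.
case: (boolP (all (fun t => t \in s) [seq (k.+1)%:R : R[i] | k <- iota 0 (size s).+1])).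
  move/allP => sub.
  have := uniq_leq_size u sub; by rewrite size_map size_iota ltnn.
by case/allPn => t ht nts; exists t; split => //; apply: nz.
Qed.

Definition limv {R : realType} (a : 'I_4 -> R[i]) :=
  fun i : 'I_4 => if i == 1 then a 1 else 0.

Lemma zc_limit (R : realType) (a : 'I_4 -> R[i]) :
  (forall t, t != 0 -> Defs.orbit a (fun i => if i == 1 then a 1 else t * a i)) ->
  zariski_closure (Defs.orbit a) (limv a).
Proof.
move=> horb p hp.
pose V := fun i : 'I_4 => if i == 1 then (a 1)%:P else a i *: 'X : {poly R[i]}.
have HV : forall t, (fun i => (V i).[t]) =1 (fun i => if i == 1 then a 1 else t * a i).
  move=> t i; rewrite /V; case: (i == 1); first by rewrite hornerC.
  by rewrite hornerZ hornerX mulrC.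
have q0 : mmap polyC V p = 0.
  apply: poly_zero_nz => t nt.
  by rewrite horner_mmap (meval_eq p (HV t)); apply: hp; apply: horb.
have := congr1 (fun q => q.[0]) q0; rewrite /= horner0 horner_mmap => <-.
by apply: meval_eq => i; rewrite HV /limv; case: (i == 1); rewrite ?mul0r.
Qed.


Lemma Z_orbit (R : realType) (a : 'I_4 -> R[i]) :
  (a 0 = 0 \/ a 2 = 0 \/ a 3 = 0) ->
  forall t, t != 0 -> Defs.orbit a (fun i => if i == 1 then a 1 else t * a i).
Proof.
move=> hZ t nt.
have ntt : t * t != 0 by rewrite mulf_neq0.
case: hZ => [h0|[h2|h3]].
- apply: (@orbit_torus R a _ (t * t)^-1 t); rewrite ?invr_eq0 // => i.
  case: (ord4P i) => -> /=.
  + by rewrite tweight0 h0 !mulr0.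
  + by rewrite tweight1 mul1r.
  + by rewrite tweight2.
  + by rewrite tweight3; congr (_ * _); field.
- apply: (@orbit_torus R a _ t (t * t)^-1); rewrite ?invr_eq0 // => i.
  case: (ord4P i) => -> /=.
  + by rewrite tweight0.
  + by rewrite tweight1 mul1r.
  + by rewrite tweight2 h2 !mulr0.
  + by rewrite tweight3; congr (_ * _); field.
- apply: (@orbit_torus R a _ t t) => // i.
  case: (ord4P i) => -> /=.
  + by rewrite tweight0.
  + by rewrite tweight1 mul1r.
  + by rewrite tweight2.
  + by rewrite tweight3 h3 !mulr0.
Qed.

Lemma zc_Z (R : realType) (a : 'I_4 -> R[i]) :
  (a 0 = 0 \/ a 2 = 0 \/ a 3 = 0) -> zariski_closure (Defs.orbit a) (limv a).
Proof. by move=> hZ; apply: zc_limit; apply: Z_orbit. Qed.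

Lemma zc_coord1 (R : realType) (a w : 'I_4 -> R[i]) :
  zariski_closure (Defs.orbit a) w -> w 1 = a 1.
Proof.
move=> h; apply/eqP; rewrite -subr_eq0; apply/eqP.
have := h ('X_1 - (a 1)%:MP); rewrite mevalB mevalXU mevalC; apply.
by move=> x hx; rewrite mevalB mevalXU mevalC (orbit1 hx) subrr.
Qed.

Lemma zc_prod (R : realType) (a w : 'I_4 -> R[i]) :
  zariski_closure (Defs.orbit a) w -> w 0 * w 2 * w 3 = a 0 * a 2 * a 3.
Proof.
move=> h; apply/eqP; rewrite -subr_eq0; apply/eqP.
have := h ('X_0 * 'X_2 * 'X_3 - (a 0 * a 2 * a 3)%:MP).
rewrite mevalB !mevalM !mevalXU mevalC; apply.
by move=> x hx; rewrite mevalB !mevalM !mevalXU mevalC (orbit_prod hx) subrr.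
Qed.

Lemma zc_orbit_closed (R : realType) (a w : 'I_4 -> R[i]) :
  a 0 != 0 -> a 2 != 0 -> a 3 != 0 ->
  zariski_closure (Defs.orbit a) w -> Defs.orbit a w.
Proof.
move=> h0 h2 h3 hw.
have w1 := zc_coord1 hw; have wp := zc_prod hw.
have : w 0 * w 2 * w 3 != 0 by rewrite wp !mulf_neq0.
rewrite !mulf_eq0 !negb_or => /andP [/andP [n0 n2] n3].
apply: (@orbit_torus R a w (w 0 / a 0) (w 2 / a 2)); rewrite ?mulf_neq0 ?invr_eq0 //.
move=> i; case: (ord4P i) => ->.
- by rewrite tweight0; field.
- by rewrite tweight1 mul1r.
- by rewrite tweight2; field.
  have e3 : w 3 = a 0 * a 2 * a 3 / (w 0 * w 2).
    by rewrite -wp; field; rewrite n0 n2.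
  by rewrite tweight3 e3; field; rewrite h0 h2 n0 n2.
Qed.

Lemma finstab_nz (R : realType) (a : 'I_4 -> R[i]) :
  a 0 != 0 -> a 2 != 0 -> finite_stabilizer a.
Proof.
move=> h0 h2.
exists [seq (a (perm4 s 0) / a 0, a (perm4 s 2) / a 2, s) | s <- enum 'S_3].
move=> [[t0 t2] s] _ hs.
have e0 := hs (perm4 s 0); have e2 := hs (perm4 s 2).
rewrite actE /= perm4K tweight0 in e0.
rewrite actE /= perm4K tweight2 in e2.
have -> : t0 = a (perm4 s 0) / a 0 by rewrite -e0; field.
have -> : t2 = a (perm4 s 2) / a 2 by rewrite -e2; field.
by apply: (map_f (fun s => (a (perm4 s 0) / a 0, a (perm4 s 2) / a 2, s))); rewrite mem_enum.
Qed.

Lemma not_finstab_zero (R : realType) (a : 'I_4 -> R[i]) :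
  a 0 = 0 -> a 2 = 0 -> a 3 = 0 -> ~ finite_stabilizer a.
Proof.
move=> h0 h2 h3 [s hs].
have [t [nt ts]] := @avoid_seq R [seq g.1.1 | g <- s].
have : (t, 1, 1%g) \in s.
  apply: hs; first by split => //=; exact: oner_neq0.
  move=> i; rewrite actE /= invg1 perm4_id.
  by case: (ord4P i) => ->; rewrite ?h0 ?h2 ?h3 ?mulr0 // tweight1 mul1r.
by move=> hin; move: ts; rewrite (map_f (fun g => g.1.1) hin).
Qed.

Lemma ps_nz (R : realType) (a : 'I_4 -> R[i]) :
  nonzero a -> a 0 != 0 -> a 2 != 0 -> a 3 != 0 -> polystable a.
Proof. by move=> nz h0 h2 h3; split => // w; apply: zc_orbit_closed. Qed.

Lemma ps_zero (R : realType) (a : 'I_4 -> R[i]) :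
  nonzero a -> a 0 = 0 -> a 2 = 0 -> a 3 = 0 -> polystable a.
Proof.
move=> nz h0 h2 h3; split => // w hw.
have ew : forall i, w i = a i.
  move=> i; apply/eqP; rewrite -subr_eq0; apply/eqP.
  have := hw ('X_i - (a i)%:MP); rewrite mevalB mevalXU mevalC; apply.
  move=> x [g [_ hx]]; rewrite mevalB mevalXU mevalC hx actE.
  case: (ord4P i) => ->.
  - have : perm4 g.2^-1 0 != 1 by rewrite perm4_neq1.
    by case/not1_cases => ->; rewrite ?h0 ?h2 ?h3 mulr0 subrr.
  - by rewrite perm4_1 tweight1 mul1r subrr.
  - have : perm4 g.2^-1 2 != 1 by rewrite perm4_neq1.
    by case/not1_cases => ->; rewrite ?h0 ?h2 ?h3 mulr0 subrr.
  - have : perm4 g.2^-1 3 != 1 by rewrite perm4_neq1.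
    by case/not1_cases => ->; rewrite ?h0 ?h2 ?h3 mulr0 subrr.
exists (1, 1, 1%g); split; first by split; exact: oner_neq0.
move=> i; rewrite ew actE /= invg1 perm4_id.
by case: (ord4P i) => ->; rewrite ?h0 ?h2 ?h3 ?mulr0 // tweight1 mul1r.
Qed.

Lemma ps_Z (R : realType) (a : 'I_4 -> R[i]) :
  polystable a -> (a 0 = 0 \/ a 2 = 0 \/ a 3 = 0) ->
  [/\ a 0 = 0, a 2 = 0 & a 3 = 0].
Proof.
move=> [_ hps] hZ.
have := hps _ (zc_Z hZ) => ho.
by apply: (orbit_supp ho).
Qed.

Lemma unstable_iff (R : realType) (a : 'I_4 -> R[i]) :
  unstable a <-> a 1 = 0 /\ (a 0 = 0 \/ a 2 = 0 \/ a 3 = 0).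
Proof.
split.
  move=> hu; have hz : zariski_closure (Defs.orbit a) (fun _ => 0) by apply: NNPP.
  have := zc_coord1 hz; have := zc_prod hz; rewrite !mul0r => /esym/eqP.
  rewrite !mulf_eq0 => /orP [/orP [/eqP -> | /eqP ->] | /eqP ->] <-; by split; auto.
move=> [h1 hZ] hs; apply: hs.
by apply: zc_ext (zc_Z hZ) => i; rewrite /limv; case: (i == 1).
Qed.


Lemma dF0 (R : realType) (x : 'I_4 -> R[i]) : (mderiv 0 (Fcub R)).@[x] = x 2 * x 3.
Proof. rewrite dF_eval /=; ring. Qed.
Lemma dF1 (R : realType) (x : 'I_4 -> R[i]) : (mderiv 1 (Fcub R)).@[x] = - 3 * x 1 ^+ 2.
Proof. rewrite dF_eval /=; ring. Qed.
Lemma dF2 (R : realType) (x : 'I_4 -> R[i]) : (mderiv 2 (Fcub R)).@[x] = x 0 * x 3.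
Proof. rewrite dF_eval /=; ring. Qed.
Lemma dF3 (R : realType) (x : 'I_4 -> R[i]) : (mderiv 3 (Fcub R)).@[x] = x 0 * x 2.
Proof. rewrite dF_eval /=; ring. Qed.

Lemma three_neq0 (R : realType) : (3 : R[i]) != 0. Proof. by rewrite pnatr_eq0. Qed.
Lemma two_neq0 (R : realType) : (2 : R[i]) != 0. Proof. by rewrite pnatr_eq0. Qed.

Lemma meets_iff (R : realType) (a : 'I_4 -> R[i]) :
  meets_SingS a <-> (a 0 = 0 \/ a 2 = 0 \/ a 3 = 0).
Proof.
split.
  move=> [p [[[k nk] [Fp dp]] lp]].
  have p1 : p 1 = 0.
    have := dp 1; rewrite dF1 => /eqP; rewrite mulf_eq0 oppr_eq0 (negbTE (three_neq0 R)) /=.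
    by rewrite expf_eq0 /= => /eqP.
  have := dp 0; rewrite dF0 => /eqP; rewrite mulf_eq0 => /orP [] /eqP e23;
  have := dp 2; rewrite dF2 => /eqP; rewrite mulf_eq0 => /orP [] /eqP e03;
  have := dp 3; rewrite dF3 => /eqP; rewrite mulf_eq0 => /orP [] /eqP e02;
  move: lp; rewrite lin_eval p1 ?e23 ?e03 ?e02 !mulr0 ?addr0 ?add0r;
  move: nk; case: (ord4P k) => -> //; rewrite ?p1 ?e23 ?e03 ?e02 ?eqxx // => nk /eqP;
  rewrite mulf_eq0 (negbTE nk) orbF => /eqP; auto.
have dfe : forall (x : 'I_4 -> R[i]) l, x 1 = 0 -> x 2 * x 3 = 0 -> x 0 * x 3 = 0 ->
    x 0 * x 2 = 0 -> (mderiv l (Fcub R)).@[x] = 0.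
  by move=> x l h1 h23 h03 h02; case: (ord4P l) => ->;
    rewrite ?dF0 ?dF1 ?dF2 ?dF3 ?h1 ?h23 ?h03 ?h02 // expr0n mulr0.
case=> [h|[h|h]].
- exists (fun l => (l == 0)%:R); split; last by rewrite lin_eval h /=; ring.
  split; first by exists 0; rewrite eqxx oner_neq0.
  by split; [rewrite Fcub_eval /=; ring | move=> l; apply: dfe; rewrite /= ?mulr0 ?mul0r].
- exists (fun l => (l == 2)%:R); split; last by rewrite lin_eval h /=; ring.
  split; first by exists 2; rewrite eqxx oner_neq0.
  by split; [rewrite Fcub_eval /=; ring | move=> l; apply: dfe; rewrite /= ?mulr0 ?mul0r].
- exists (fun l => (l == 3)%:R); split; last by rewrite lin_eval h /=; ring.
  split; first by exists 3; rewrite eqxx oner_neq0.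
  by split; [rewrite Fcub_eval /=; ring | move=> l; apply: dfe; rewrite /= ?mulr0 ?mul0r].
Qed.

Definition roles3 (i j k : 'I_4) :=
  [\/ (i, j, k) = (0, 2, 3), (i, j, k) = (2, 0, 3) | (i, j, k) = (3, 0, 2)].
Definition roles (i j k : 'I_4) := roles3 i j k \/ roles3 i k j.

Ltac rcase := case=> [[[-> -> ->]|[-> -> ->]|[-> -> ->]]|[[-> -> ->]|[-> -> ->]|[-> -> ->]]].

Definition mk {R : realType} (i j k : 'I_4) (ci c1 cj ck : R[i]) : 'I_4 -> R[i] :=
  fun l => if l == i then ci else if l == 1 then c1 else if l == j then cj else ck.

Lemma mk_vals (R : realType) i j k (ci c1 cj ck : R[i]) : roles i j k ->
  [/\ mk i j k ci c1 cj ck i = ci, mk i j k ci c1 cj ck 1 = c1,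
      mk i j k ci c1 cj ck j = cj & mk i j k ci c1 cj ck k = ck].
Proof. by rcase. Qed.

Lemma e_vals (R : realType) i j k : roles i j k ->
  [/\ (i == i)%:R = 1 :> R[i], (1 == i)%:R = 0 :> R[i],
      (j == i)%:R = 0 :> R[i] & (k == i)%:R = 0 :> R[i]].
Proof. by rcase. Qed.

Lemma r_sum (V : comRingType) i j k (f : 'I_4 -> V) : roles i j k ->
  \sum_l f l = f i + f 1 + f j + f k.
Proof. by rewrite sum4; rcase; ring. Qed.

Lemma r_F (R : realType) i j k (x : 'I_4 -> R[i]) : roles i j k ->
  (Fcub R).@[x] = x i * x j * x k - x 1 ^+ 3.
Proof. by rewrite Fcub_eval; rcase; ring. Qed.

Lemma r_Fpoly (R : realType) i j k : roles i j k ->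
  Fcub R = 'X_i * 'X_j * 'X_k - 'X_1 ^+ 3.
Proof. by rewrite /Fcub; rcase; ring. Qed.

Lemma r_lin (R : realType) i j k (a x : 'I_4 -> R[i]) : roles i j k ->
  (lin a).@[x] = a i * x i + a 1 * x 1 + a j * x j + a k * x k.
Proof. by rewrite lin_eval; rcase; ring. Qed.

Lemma r_linpoly (R : realType) i j k (a : 'I_4 -> R[i]) : roles i j k ->
  lin a = a i *: 'X_i + a 1 *: 'X_1 + a j *: 'X_j + a k *: 'X_k.
Proof. by move=> hr; rewrite /lin (r_sum _ (fun l => a l *: ('X_l : {mpoly R[i][4]})) hr). Qed.

Lemma r_hess (R : realType) i j k (p v : 'I_4 -> R[i]) : roles i j k ->
  hessq p v = 2 * (p i * v j * v k + p j * v i * v k + p k * v i * v j)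
     - 6 * p 1 * v 1 ^+ 2.
Proof. by rewrite hessq_eval; rcase; ring. Qed.

Lemma r_not1 i j k : roles i j k -> i != 1.
Proof. by case=> [[[-> _ _]|[-> _ _]|[-> _ _]]|[[-> _ _]|[-> _ _]|[-> _ _]]]. Qed.

Lemma SingS_e (R : realType) (l : 'I_4) : l != 1 -> SingS (fun m => (m == l)%:R : R[i]).
Proof.
have dfe : forall (x : 'I_4 -> R[i]) l, x 1 = 0 -> x 2 * x 3 = 0 -> x 0 * x 3 = 0 ->
    x 0 * x 2 = 0 -> (mderiv l (Fcub R)).@[x] = 0.
  by move=> x l' h1 h23 h03 h02; case: (ord4P l') => ->;
    rewrite ?dF0 ?dF1 ?dF2 ?dF3 ?h1 ?h23 ?h03 ?h02 // expr0n mulr0.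
move=> hl; split; first by exists l; rewrite eqxx oner_neq0.
case: (not1_cases _ hl) => ->; (split;
  [rewrite Fcub_eval /=; ring | move=> m; apply: dfe; rewrite /= ?mulr0 ?mul0r //]).
Qed.

Lemma cusp_roles (R : realType) i j k (a : 'I_4 -> R[i]) : roles i j k ->
  a i = 0 -> a 1 = 0 -> a j != 0 -> a k != 0 ->
  cuspidal_cubic a /\ exists p, SingD a p /\ SingS p.
Proof.
move=> hr hi h1 hj hk.
have [pi p1 pj pk] := e_vals R hr.
pose p := (fun m => (m == i)%:R : R[i]).
have hS : SingS p := @SingS_e R i (r_not1 hr).
have hD : SingD a p.
  split; last by exists 0 => l; rewrite mul0r; case: hS => _ [_ ->].
  case: hS => nzp [Fp _]; split => //; split => //.
  by rewrite (r_lin _ _ _ hr) /p pi p1 pj pk hi h1; ring.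
split; last by exists p.
split.
  move=> [L [Q [M [hL hQ hM _ hF]]]].
  have hL' := homog1_lin _ hL.
  pose b := fun l => L@_U_(l).
  have key : forall x, (lin a).@[x] = 0 -> (lin b).@[x] = 0 -> (Fcub R).@[x] = 0.
    by move=> x ha hb; rewrite hF mevalD !mevalM ha hL' hb !mul0r addr0.
  have [bi|nbi] := eqVneq (b i) 0; last first.
    pose x := mk i j k (- b 1 / b i) 1 0 0.
    have [xi x1 xj xk] := mk_vals R (- b 1 / b i) 1 0 0 hr.
    have := key x; rewrite /x.
    rewrite !(r_lin _ _ _ hr) (r_F _ _ hr) xi x1 xj xk hi h1.
    have -> : b i * (- b 1 / b i) + b 1 * 1 + b j * 0 + b k * 0 = 0 by field.
    have -> : 0 * (- b 1 / b i) + 0 * 1 + a j * 0 + a k * 0 = 0 by ring.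
    have -> : - b 1 / b i * 0 * 0 - 1 ^+ 3 = -1 by ring.
    by move/(_ erefl erefl)/eqP; rewrite oppr_eq0 oner_eq0.
  have [b1|nb1] := eqVneq (b 1) 0.
    pose x := mk i j k (0 : R[i]) 1 0 0.
    have [xi x1 xj xk] := mk_vals R (0 : R[i]) 1 0 0 hr.
    have := key x; rewrite /x.
    rewrite !(r_lin _ _ _ hr) (r_F _ _ hr) xi x1 xj xk hi h1 bi b1.
    have -> : 0 * 0 + 0 * 1 + b j * 0 + b k * 0 = 0 :> R[i] by ring.
    have -> : 0 * 0 + 0 * 1 + a j * 0 + a k * 0 = 0 :> R[i] by ring.
    have -> : 0 * 0 * 0 - 1 ^+ 3 = -1 :> R[i] by ring.
    by move/(_ erefl erefl)/eqP; rewrite oppr_eq0 oner_eq0.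
  pose y : R[i] := - (b j * a k - b k * a j) / b 1.
  pose z : R[i] := - (1 + y ^+ 3) / (a j * a k).
  pose x := mk i j k z y (a k) (- a j).
  have [xi x1 xj xk] := mk_vals R z y (a k) (- a j) hr.
  have := key x; rewrite /x.
  rewrite !(r_lin _ _ _ hr) (r_F _ _ hr) xi x1 xj xk hi h1 bi.
  have -> : 0 * z + b 1 * y + b j * a k + b k * - a j = 0 by rewrite /y; field.
  have -> : 0 * z + 0 * y + a j * a k + a k * - a j = 0 by ring.
  have -> : z * a k * - a j - y ^+ 3 = 1 by rewrite /z; field; rewrite hj hk.
  by move/(_ erefl erefl)/eqP; rewrite oner_eq0.
exists p; split => //; split.
  pose s := sqrtc (-2 * a j / a k).
  have hs : s ^+ 2 = -2 * a j / a k := sqr_sqrtc _.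
  exists (mk i j k 0 0 s 0) => v hv.
  have [mi m1 mj mk'] := mk_vals R (0 : R[i]) 0 s 0 hr.
  rewrite (r_lin _ _ _ hr) hi h1 !mul0r !add0r in hv.
  have ek : v k = - (a j * v j) / a k.
    apply: (mulfI hk); transitivity (- (a j * v j)); last by field.
    by apply/eqP; rewrite -addr_eq0 addrC hv.
  rewrite (r_hess _ _ _ hr) (r_sum _ _ hr) /p pi p1 pj pk mi m1 mj mk' ek.
  apply/eqP; rewrite -subr_eq0; apply/eqP.
  transitivity ((-2 * a j / a k - s ^+ 2) * v j ^+ 2); first by field.
  by rewrite hs subrr mul0r.
exists (mk i j k 0 0 (a k) (- a j)).
have [mi m1 mj mk'] := mk_vals R (0 : R[i]) 0 (a k) (- a j) hr.
split; first by rewrite (r_lin _ _ _ hr) mi m1 mj mk' hi h1; ring.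
rewrite (r_hess _ _ _ hr) /p pi p1 pj pk mi m1 mj mk'.
have -> : 2 * (1 * a k * - a j + 0 * 0 * - a j + 0 * 0 * a k) - 6 * 0 * 0 ^+ 2
   = - (2 * (a k * a j)) :> R[i] by ring.
by rewrite oppr_eq0 !mulf_neq0 // two_neq0.
Qed.

Lemma X_homog (R : realType) (l : 'I_4) : ('X_l : {mpoly R[i][4]}) \is 1.-homog.
Proof. by rewrite dhomogX; apply/eqP; apply: mdeg1. Qed.

Lemma triple_roles (R : realType) i j k (a : 'I_4 -> R[i]) : roles i j k ->
  a i = 0 -> a 1 = 0 -> a j = 0 -> a k != 0 -> triple_line a.
Proof.
move=> hr hi h1 hj hk.
exists (- 'X_1), ((a k)^-1 *: ('X_i * 'X_j)); split.
- by rewrite rpredN X_homog.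
- by apply: dhomogZ; apply: (dhomogM (X_homog _ _) (X_homog _ _)).
- move=> c; apply/eqP => e.
  have := congr1 (meval (fun l : 'I_4 => (l == 1)%:R)) e.
  rewrite mevalN mevalXU mevalZ lin_eval /= h1.
  have -> : c * (a 0 * 0 + 0 * 1 + a 2 * 0 + a 3 * 0) = 0 :> R[i] by ring.
  by move/eqP; rewrite oppr_eq0 oner_eq0.
rewrite (r_Fpoly _ hr) (r_linpoly _ _ hr) hi h1 hj !scale0r !add0r.
rewrite -scalerAl -scalerAr scalerA mulfV // scale1r; ring.
Qed.


Lemma six_neq0 (R : realType) : (6 : R[i]) != 0. Proof. by rewrite pnatr_eq0. Qed.

Lemma diff0 (R : realType) (x y : R[i]) : x - y = 0 -> x = y.
Proof. by move/eqP; rewrite subr_eq0 => /eqP. Qed.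

Lemma cube0 (R : realType) (x : R[i]) : x ^+ 3 = 0 -> x = 0.
Proof. by move/eqP; rewrite expf_eq0 /= => /eqP. Qed.

Lemma cube0' (R : realType) (x : R[i]) : x * (x * x) = 0 -> x = 0.
Proof. by move/eqP; rewrite !mulf_eq0 !orbb => /eqP. Qed.

Lemma alg1 (R : realType) (t a0 a2 a3 c0 c2 c3 : R[i]) :
  (forall u0 u2 u3 : R[i], t * u0 * u2 * u3 + (a0 * u0 + a2 * u2 + a3 * u3) ^+ 3
      = (c0 * u0 + c2 * u2 + c3 * u3) ^+ 3) -> t = 0.
Proof.
move=> H.
pose D u0 u2 u3 := t * u0 * u2 * u3 + (a0 * u0 + a2 * u2 + a3 * u3) ^+ 3
      - (c0 * u0 + c2 * u2 + c3 * u3) ^+ 3.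
have hD : forall u0 u2 u3, D u0 u2 u3 = 0 by move=> u0 u2 u3; rewrite /D H subrr.
have k0 : a0 ^+ 3 = c0 ^+ 3 by apply: diff0; rewrite -(hD 1 0 0) /D; ring.
have k2 : a2 ^+ 3 = c2 ^+ 3 by apply: diff0; rewrite -(hD 0 1 0) /D; ring.
have k3 : a3 ^+ 3 = c3 ^+ 3 by apply: diff0; rewrite -(hD 0 0 1) /D; ring.
have pr : forall (x y : R[i]), 6 * (x - y) = 0 -> x = y.
  move=> x y /eqP; rewrite mulf_eq0 (negbTE (six_neq0 R)) /= => /eqP; exact: diff0.
have p02 : a0 ^+ 2 * a2 = c0 ^+ 2 * c2.
  apply: pr; transitivity (D 1 1 0 - D 1 (-1) 0 - 2 * D 0 1 0); first by rewrite /D; ring.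
  by rewrite !hD; ring.
have p20 : a2 ^+ 2 * a0 = c2 ^+ 2 * c0.
  apply: pr; transitivity (D 1 1 0 - D (-1) 1 0 - 2 * D 1 0 0); first by rewrite /D; ring.
  by rewrite !hD; ring.
have p03 : a0 ^+ 2 * a3 = c0 ^+ 2 * c3.
  apply: pr; transitivity (D 1 0 1 - D 1 0 (-1) - 2 * D 0 0 1); first by rewrite /D; ring.
  by rewrite !hD; ring.
have p30 : a3 ^+ 2 * a0 = c3 ^+ 2 * c0.
  apply: pr; transitivity (D 1 0 1 - D (-1) 0 1 - 2 * D 1 0 0); first by rewrite /D; ring.
  by rewrite !hD; ring.
have p23 : a2 ^+ 2 * a3 = c2 ^+ 2 * c3.
  apply: pr; transitivity (D 0 1 1 - D 0 1 (-1) - 2 * D 0 0 1); first by rewrite /D; ring.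
  by rewrite !hD; ring.
have p32 : a3 ^+ 2 * a2 = c3 ^+ 2 * c2.
  apply: pr; transitivity (D 0 1 1 - D 0 (-1) 1 - 2 * D 0 1 0); first by rewrite /D; ring.
  by rewrite !hD; ring.
have tot : t = 6 * (c0 * c2 * c3 - a0 * a2 * a3).
  apply: diff0.
  transitivity (D 1 1 1 - (a0 ^+ 3 - c0 ^+ 3) - (a2 ^+ 3 - c2 ^+ 3) - (a3 ^+ 3 - c3 ^+ 3)
    - 3 * (a0 ^+ 2 * a2 - c0 ^+ 2 * c2) - 3 * (a2 ^+ 2 * a0 - c2 ^+ 2 * c0)
    - 3 * (a0 ^+ 2 * a3 - c0 ^+ 2 * c3) - 3 * (a3 ^+ 2 * a0 - c3 ^+ 2 * c0)
    - 3 * (a2 ^+ 2 * a3 - c2 ^+ 2 * c3) - 3 * (a3 ^+ 2 * a2 - c3 ^+ 2 * c2)).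
    by rewrite /D; ring.
  by rewrite hD k0 k2 k3 p02 p20 p03 p30 p23 p32 !subrr; ring.
rewrite tot.
suff -> : c0 * c2 * c3 = a0 * a2 * a3 by rewrite subrr mulr0.
have [z0|n0] := eqVneq a0 0.
  by have := k0; rewrite z0 expr0n /= => /esym/cube0 ->; rewrite !mul0r.
have [z2|n2] := eqVneq a2 0.
  by have := k2; rewrite z2 expr0n /= => /esym/cube0 ->; rewrite !mulr0 !mul0r.
have [z3|n3] := eqVneq a3 0.
  by have := k3; rewrite z3 expr0n /= => /esym/cube0 ->; rewrite !mulr0.
have nc : forall x y : R[i], x != 0 -> x ^+ 3 = y ^+ 3 -> y != 0.
  move=> x y nx e; apply/eqP => y0; move: e; rewrite y0 expr0n /= => /cube0 x0.
  by move/eqP: nx.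
have m0 := nc _ _ n0 k0; have m2 := nc _ _ n2 k2; have m3 := nc _ _ n3 k3.
have r2 : a0 * c2 = c0 * a2.
  apply: diff0; apply/eqP.
  have : a0 * a2 * c0 * c2 * (a0 * c2 - c0 * a2) = 0.
    transitivity ((a0 ^+ 2 * a2) * (c2 ^+ 2 * c0) - (c0 ^+ 2 * c2) * (a2 ^+ 2 * a0)).
      by ring.
    by rewrite p02 p20; ring.
  by move/eqP; rewrite !mulf_eq0 (negbTE n0) (negbTE n2) (negbTE m0) (negbTE m2).
have r3 : a0 * c3 = c0 * a3.
  apply: diff0; apply/eqP.
  have : a0 * a3 * c0 * c3 * (a0 * c3 - c0 * a3) = 0.
    transitivity ((a0 ^+ 2 * a3) * (c3 ^+ 2 * c0) - (c0 ^+ 2 * c3) * (a3 ^+ 2 * a0)).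
      by ring.
    by rewrite p03 p30; ring.
  by move/eqP; rewrite !mulf_eq0 (negbTE n0) (negbTE n3) (negbTE m0) (negbTE m3).
apply: (mulIf (expf_neq0 2 n0)).
transitivity (c0 * (a0 * c2) * (a0 * c3)); first by ring.
rewrite r2 r3.
transitivity (c0 ^+ 3 * a2 * a3); first by ring.
by rewrite -k0; ring.
Qed.

Definition vec4 {R : realType} (x0 x1 x2 x3 : R[i]) : 'I_4 -> R[i] :=
  fun l => if l == 0 then x0 else if l == 1 then x1 else if l == 2 then x2 else x3.

Lemma triple_to (R : realType) (a : 'I_4 -> R[i]) :
  triple_line a -> a 1 = 0 /\ (a 0 = 0 \/ a 2 = 0 \/ a 3 = 0).
Proof.
move=> [L [M [hL hM _ hF]]].
have hL' := homog1_lin _ hL.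
pose b := fun l => L@_U_(l).
have key : forall x, (lin a).@[x] = 0 ->
    (Fcub R).@[x] = (lin b).@[x] * ((lin b).@[x] * (lin b).@[x]).
  by move=> x ha; rewrite hF mevalD !mevalM ha mul0r addr0 hL'.
have a10 : a 1 = 0.
  apply: cube0; apply: (@alg1 R _ (a 0) (a 2) (a 3)
    (a 1 * b 0 - a 0 * b 1) (a 1 * b 2 - a 2 * b 1) (a 1 * b 3 - a 3 * b 1)).
  move=> u0 u2 u3.
  have := key (vec4 (a 1 * u0) (- (a 0 * u0 + a 2 * u2 + a 3 * u3)) (a 1 * u2) (a 1 * u3)).
  rewrite Fcub_eval !lin_eval /vec4 /= => E.
  have {}E := E ltac:(ring).
  apply: diff0; transitivity ((a 1 * u0) * (a 1 * u2) * (a 1 * u3)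
      - (- (a 0 * u0 + a 2 * u2 + a 3 * u3)) ^+ 3 - (b 0 * (a 1 * u0) + b 1 * (- (a 0 * u0 + a 2 * u2 + a 3 * u3)) + b 2 * (a 1 * u2) + b 3 * (a 1 * u3)) *
   ((b 0 * (a 1 * u0) + b 1 * (- (a 0 * u0 + a 2 * u2 + a 3 * u3)) + b 2 * (a 1 * u2) + b 3 * (a 1 * u3)) *
    (b 0 * (a 1 * u0) + b 1 * (- (a 0 * u0 + a 2 * u2 + a 3 * u3)) + b 2 * (a 1 * u2) + b 3 * (a 1 * u3)))).
    by ring.
  by rewrite E subrr.
split => //.
have [z0|n0] := eqVneq (a 0) 0; first by left.
have [z2|n2] := eqVneq (a 2) 0; first by right; left.
have [z3|n3] := eqVneq (a 3) 0; first by right; right.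
exfalso.
have E1 := key (vec4 (a 2) 0 (- a 0) 0).
rewrite Fcub_eval !lin_eval /vec4 /= in E1.
have {}E1 := E1 ltac:(rewrite a10; ring).
have u0 : b 0 * a 2 + b 1 * 0 + b 2 * - a 0 + b 3 * 0 = 0.
  by apply: cube0'; rewrite -E1; ring.
have E2 := key (vec4 (a 3) 0 0 (- a 0)).
rewrite Fcub_eval !lin_eval /vec4 /= in E2.
have {}E2 := E2 ltac:(rewrite a10; ring).
have w0 : b 0 * a 3 + b 1 * 0 + b 2 * 0 + b 3 * - a 0 = 0.
  by apply: cube0'; rewrite -E2; ring.
have E3 := key (vec4 (a 2 * a 3) 0 (a 0 * a 3) (-2 * a 0 * a 2)).
rewrite Fcub_eval !lin_eval /vec4 /= in E3.
have {}E3 := E3 ltac:(rewrite a10; ring).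
have l0 : b 0 * (a 2 * a 3) + b 1 * 0 + b 2 * (a 0 * a 3) + b 3 * (-2 * a 0 * a 2) = 0.
  transitivity (- a 3 * (b 0 * a 2 + b 1 * 0 + b 2 * - a 0 + b 3 * 0)
     + 2 * a 2 * (b 0 * a 3 + b 1 * 0 + b 2 * 0 + b 3 * - a 0)); first by ring.
  by rewrite u0 w0; ring.
move: E3; rewrite l0.
have -> : a 2 * a 3 * (a 0 * a 3) * (-2 * a 0 * a 2) - 0 ^+ 3
  = - (2 * (a 0 * a 2 * a 3) ^+ 2) by ring.
move/eqP; rewrite mul0r oppr_eq0 mulf_eq0 (negbTE (two_neq0 R)) expf_eq0 /=.
by rewrite !mulf_eq0 (negbTE n0) (negbTE n2) (negbTE n3).
Qed.

Lemma cusp_to (R : realType) (a : 'I_4 -> R[i]) :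
  (cuspidal_cubic a /\ exists p, SingD a p /\ SingS p) ->
  a 1 = 0 /\ (a 0 = 0 \/ a 2 = 0 \/ a 3 = 0).
Proof.
move=> [[_ [q [[[nzq [Fq lq]] [c hc]] [[m hm] _]]]] [p [[[_ [_ lp]] _] hpS]]].
have hZ : a 0 = 0 \/ a 2 = 0 \/ a 3 = 0 by apply/meets_iff; exists p.
split => //.
have [//|na1] := eqVneq (a 1) 0; exfalso.
have q1 : q 1 = 0.
  have [//|nq1] := eqVneq (q 1) 0; exfalso.
  have e1 := hc 1; rewrite dF1 in e1.
  have nc : c != 0.
    apply/eqP => c0; move: e1; rewrite c0 mul0r => /eqP.
    by rewrite mulf_eq0 oppr_eq0 (negbTE (three_neq0 R)) expf_eq0 /= (negbTE nq1).
  rewrite Fcub_eval in Fq.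
  have : q 0 * q 2 * q 3 != 0.
    by move/diff0: Fq => ->; rewrite expf_eq0 /= nq1.
  rewrite !mulf_eq0 !negb_or => /andP [/andP [n0 n2] n3].
  have e0 := hc 0; rewrite dF0 in e0.
  have e2 := hc 2; rewrite dF2 in e2.
  have e3 := hc 3; rewrite dF3 in e3.
  case: hZ => [z|[z|z]].
  - by move: e0; rewrite z mulr0 => /eqP; rewrite mulf_eq0 (negbTE n2) (negbTE n3).
  - by move: e2; rewrite z mulr0 => /eqP; rewrite mulf_eq0 (negbTE n0) (negbTE n3).
  - by move: e3; rewrite z mulr0 => /eqP; rewrite mulf_eq0 (negbTE n0) (negbTE n2).
pose mu0 := a 1 * m 0 - a 0 * m 1.
pose mu2 := a 1 * m 2 - a 2 * m 1.
pose mu3 := a 1 * m 3 - a 3 * m 1.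
have G : forall s0 s2 s3 : R[i],
    2 * a 1 ^+ 2 * (q 3 * s0 * s2 + q 2 * s0 * s3 + q 0 * s2 * s3)
    = (mu0 * s0 + mu2 * s2 + mu3 * s3) ^+ 2.
  move=> s0 s2 s3.
  have := hm (vec4 (a 1 * s0) (- (a 0 * s0 + a 2 * s2 + a 3 * s3)) (a 1 * s2) (a 1 * s3)).
  rewrite lin_eval hessq_eval sum4 /vec4 /= q1 => E.
  have {}E := E ltac:(ring).
  transitivity (2 * (q 3 * (a 1 * s0) * (a 1 * s2) + q 2 * (a 1 * s0) * (a 1 * s3) + q 0 * (a 1 * s2) * (a 1 * s3)) -
     6 * 0 * (- (a 0 * s0 + a 2 * s2 + a 3 * s3)) ^+ 2); first by ring.
  by rewrite E /mu0 /mu2 /mu3; ring.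
have sq0 : forall x : R[i], x ^+ 2 = 0 -> x = 0.
  by move=> x /eqP; rewrite expf_eq0 /= => /eqP.
have m0 : mu0 = 0.
  apply: sq0; transitivity ((mu0 * 1 + mu2 * 0 + mu3 * 0) ^+ 2); first by ring.
  by rewrite -G; ring.
have m2 : mu2 = 0.
  apply: sq0; transitivity ((mu0 * 0 + mu2 * 1 + mu3 * 0) ^+ 2); first by ring.
  by rewrite -G; ring.
have m3 : mu3 = 0.
  apply: sq0; transitivity ((mu0 * 0 + mu2 * 0 + mu3 * 1) ^+ 2); first by ring.
  by rewrite -G; ring.
have k : forall x : R[i], 2 * a 1 ^+ 2 * x = 0 -> x = 0.
  move=> x /eqP; rewrite !mulf_eq0 (negbTE (two_neq0 R)) (negbTE na1) /=.
  by move/eqP.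
have q3 : q 3 = 0.
  apply: k; transitivity (2 * a 1 ^+ 2 * (q 3 * 1 * 1 + q 2 * 1 * 0 + q 0 * 1 * 0)); first by ring.
  by rewrite G m0 m2 m3; ring.
have q2 : q 2 = 0.
  apply: k; transitivity (2 * a 1 ^+ 2 * (q 3 * 1 * 0 + q 2 * 1 * 1 + q 0 * 0 * 1)); first by ring.
  by rewrite G m0 m2 m3; ring.
have q0 : q 0 = 0.
  apply: k; transitivity (2 * a 1 ^+ 2 * (q 3 * 0 * 1 + q 2 * 0 * 1 + q 0 * 1 * 1)); first by ring.
  by rewrite G m0 m2 m3; ring.
case: nzq => l; case: (ord4P l) => ->; by rewrite ?q0 ?q1 ?q2 ?q3 eqxx.
Qed.

Unset Implicit Arguments.

Theorem corollary4p13 (R : realType) (a : 'I_4 -> R[i]) :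
  nonzero a ->
  [/\ stable a <-> ~ meets_SingS a,
      (polystable a /\ ~ stable a) <-> is_Hstar a
    & unstable a <->
      ((cuspidal_cubic a /\ exists p, SingD a p /\ SingS p) \/ triple_line a)].
Proof.
move=> nz.
have nzZ : a 0 = 0 -> a 2 = 0 -> a 3 = 0 -> a 1 != 0.
  move=> z0 z2 z3; case: nz => l; by case: (ord4P l) => ->; rewrite ?z0 ?z2 ?z3 ?eqxx.
have stable_iff : stable a <-> [/\ a 0 != 0, a 2 != 0 & a 3 != 0].
  split.
    move=> [hps hfin].
    have nZ : ~ (a 0 = 0 \/ a 2 = 0 \/ a 3 = 0).
      move=> hZ; have [z0 z2 z3] := ps_Z hps hZ.
      exact: (not_finstab_zero z0 z2 z3 hfin).
    by split; apply/eqP => z; apply: nZ; auto.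
  move=> [n0 n2 n3]; split; [exact: ps_nz | exact: finstab_nz].
have Zneg : (a 0 = 0 \/ a 2 = 0 \/ a 3 = 0) <-> ~ [/\ a 0 != 0, a 2 != 0 & a 3 != 0].
  split.
    by case=> [z|[z|z]] [n0 n2 n3]; [move/eqP: n0|move/eqP: n2|move/eqP: n3].
  move=> h; have [z0|n0] := eqVneq (a 0) 0; first by left.
  have [z2|n2] := eqVneq (a 2) 0; first by right; left.
  have [z3|n3] := eqVneq (a 3) 0; first by right; right.
  by exfalso; apply: h.
split.
- rewrite stable_iff meets_iff Zneg; split; first by move=> h nh; apply: nh.
  move=> h; split; apply/negP => /eqP z; apply: h => -[n0 n2 n3];
    by move: n0 n2 n3; rewrite z eqxx.
- split.
    move=> [hps hns].
    have hZ : a 0 = 0 \/ a 2 = 0 \/ a 3 = 0 by apply/Zneg => h; apply: hns; apply/stable_iff.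
    have [z0 z2 z3] := ps_Z hps hZ.
    exists (a 1); split; first exact: nzZ.
    by move=> l; case: (ord4P l) => -> /=; rewrite ?z0 ?z2 ?z3 ?mulr0 ?mulr1.
  move=> [c [nc hc]].
  have z0 : a 0 = 0 by rewrite hc /= mulr0.
  have z2 : a 2 = 0 by rewrite hc /= mulr0.
  have z3 : a 3 = 0 by rewrite hc /= mulr0.
  split; first exact: ps_zero.
  by move/stable_iff => [/eqP].
- rewrite unstable_iff; split; last first.
    by case; [apply: cusp_to | apply: triple_to].
  move=> [h1 hZ].
  have r023 : roles 0 2 3 by left; constructor 1.
  have r203 : roles 2 0 3 by left; constructor 2.
  have r302 : roles 3 0 2 by left; constructor 3.
  have r230 : roles 2 3 0 by right; constructor 2.
  have [z0|n0] := eqVneq (a 0) 0; have [z2|n2] := eqVneq (a 2) 0;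
    have [z3|n3] := eqVneq (a 3) 0.
  + by move: (nzZ z0 z2 z3); rewrite h1 eqxx.
  + by right; apply: (@triple_roles R _ _ _ a r023).
  + by right; apply: (@triple_roles R _ _ _ a r302).
  + by left; apply: (@cusp_roles R _ _ _ a r023).
  + by right; apply: (@triple_roles R _ _ _ a r230).
  + by left; apply: (@cusp_roles R _ _ _ a r203).
  + by left; apply: (@cusp_roles R _ _ _ a r302).
  + by exfalso; case: hZ => [/eqP|[/eqP|/eqP]]; apply/negP.
Qed.
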